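(* Let $R$ be a valuation ring with maximal ideal $P$, let $E$ be an injective $R$-module and let $r\in P$. Then $E/rE$ is an injective $R/rR$-module.
   Context: All rings are commutative with identity. A valuation ring is a ring whose ideals are totally ordered by inclusion; $P$ denotes its unique maximal ideal. *)

(* Defs.v *)
From HB Require Import structures.
From mathcomp Require Import all_boot all_order all_algebra.
Set Implicit Arguments. Unset Strict Implicit. Unset Printing Implicit Defensive.
Import GRing.Theory.
Local Open Scope ring_scope.

Definition is_ideal (R : comNzRingType) (I : R -> Prop) : Prop :=
  [/\ I 0, (forall x y, I x -> I y -> I (x + y)) & (forall a x, I x -> I (a * x))].

Definition valuation_ring (R : comNzRingType) : Prop :=
  forall I J : R -> Prop, is_ideal I -> is_ideal J ->
    (forall x, I x -> J x) \/ (forall x, J x -> I x).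

Definition maximal_ideal (R : comNzRingType) (P : R -> Prop) : Prop :=
  [/\ is_ideal P, ~ P 1 &
      forall J : R -> Prop, is_ideal J -> ~ J 1 -> (forall x, P x -> J x) ->
        forall x, J x -> P x].

Definition injective_module (S : comNzRingType) (E : lmodType S) : Prop :=
  forall (A B : lmodType S) (f : {linear A -> B}) (g : {linear A -> E}),
    injective f -> exists h : {linear B -> E}, forall a, h (f a) = g a.

(* Main.v *)
Require Import Defs.
From HB Require Import structures.
From mathcomp Require Import all_boot all_order all_algebra.
From mathcomp Require Import boolp classical_sets.
From Stdlib Require Import ClassicalEpsilon.

Import GRing.Theory.
Local Open Scope ring_scope.
Set Implicit Arguments. Unset Strict Implicit.

Record subpred (R : comNzRingType) (V : lmodType R) := SubPred {
  spD :> V -> Prop;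
  sp0 : spD 0;
  spB : forall x y, spD x -> spD y -> spD (x - y);
  spZ : forall (a : R) x, spD x -> spD (a *: x) }.

Definition Dp R V (D : @subpred R V) : pred V := fun x => `[< D x >].
Lemma Dp_sub R V (D : @subpred R V) : submod_closed (Dp D).
Proof.
split; first by apply/asboolP; apply: sp0.
move=> a x y /asboolP Hx /asboolP Hy; apply/asboolP.
have -> : a *: x + y = a *: x - (0 - y) by rewrite sub0r opprK.
by apply: spB; [apply: spZ | apply: spB => //; apply: sp0].
Qed.
HB.instance Definition _ (R : comNzRingType) (V : lmodType R) (D : subpred V) := GRing.isSubmodClosed.Build R V (@Dp R V D) (@Dp_sub R V D).
Definition subm R V (D : @subpred R V) := {x : V | Dp D x}.
HB.instance Definition _ (R : comNzRingType) (V : lmodType R) (D : subpred V) := [isSub of @subm R V D for (@sval V (Dp D))].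
HB.instance Definition _ (R : comNzRingType) (V : lmodType R) (D : subpred V) := [Choice of @subm R V D by <:].
HB.instance Definition _ (R : comNzRingType) (V : lmodType R) (D : subpred V) := [SubChoice_isSubLmodule of @subm R V D by <:].
Definition mkLin (S : comNzRingType) (U V : lmodType S) (f : U -> V) (H : linear f) : {linear U -> V} :=
  HB.pack f (GRing.isLinear.Build S U V *:%R f H).
Lemma mkLinE S U V f H x : @mkLin S U V f H x = f x. Proof. by []. Qed.
Lemma val_lin (R : comNzRingType) (V : lmodType R) D : linear (val : subm D -> V).
Proof. by move=> a x y. Qed.

Section Ideals.
Variable (R : comNzRingType).
Variable (I : R -> Prop) (hI : is_ideal I).
Lemma idealN x : I x -> I (- x).
Proof. by case: hI => _ _ hM Hx; rewrite -mulN1r; apply: hM. Qed.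
Lemma idealB x y : I x -> I y -> I (x - y).
Proof. by case: hI => _ hA _ Hx Hy; apply: hA => //; apply: idealN. Qed.
Definition ideal_sp : subpred (R^o).
Proof.
refine (@SubPred R R^o I _ _ _).
- by case: hI.
- exact: idealB.
- by case: hI => _ _ hM a x Hx; apply: hM.
Defined.
End Ideals.

Lemma baerE (R : comNzRingType) (E : lmodType R) (hE : injective_module E)
  (I : R -> Prop) (hI : is_ideal I) (psi : R -> E)
  (psiD : forall x y, I x -> I y -> psi (x + y) = psi x + psi y)
  (psiZ : forall a x, I x -> psi (a * x) = a *: psi x) :
  exists e, forall c, I c -> psi c = c *: e.
Proof.
pose D := ideal_sp hI.
have glin : linear (fun z : subm D => psi (val z)).
  move=> a x y /=.
  have Hx : I (val x) by move: (valP x) => /asboolP.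
  have Hy : I (val y) by move: (valP y) => /asboolP.
  have Hax : I (a * val x) by case: (hI) => _ _ hM; apply: hM.
  by rewrite psiD // psiZ.
have [h Hh] := hE _ _ (mkLin (@val_lin R R^o D)) (mkLin glin) val_inj.
exists (h (1 : R^o)) => c Hc.
have Hc' : Dp D c by apply/asboolP.
have := Hh (exist _ c Hc'); rewrite !mkLinE /= => <-.
by rewrite -linearZ /=; congr (h _); rewrite /GRing.scale /= mulr1.
Qed.

Lemma principal_ideal (R : comNzRingType) (u : R) : is_ideal (fun x => exists w, x = u * w).
Proof.
split; first by exists 0; rewrite mulr0.
- by move=> x y [w ->] [w' ->]; exists (w + w'); rewrite mulrDr.
- by move=> a x [w ->]; exists (a * w); rewrite mulrCA.
Qed.

Lemma chain (R : comNzRingType) (hR : valuation_ring R) (u v : R) :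
  (exists w, v = u * w) \/ (exists w, u = v * w).
Proof.
case: (hR _ _ (principal_ideal u) (principal_ideal v)) => H.
- by right; apply: H; exists 1; rewrite mulr1.
- by left; apply: H; exists 1; rewrite mulr1.
Qed.

Section Main.
Variables (R : comNzRingType) (hR : valuation_ring R)
  (E : lmodType R) (hE : injective_module E)
  (r : R)
  (S : comNzRingType) (pi : {rmorphism R -> S})
  (pi_surj : forall s : S, exists a : R, pi a = s)
  (pi_ker : forall a : R, pi a = 0 <-> exists b : R, a = r * b)
  (Q : lmodType S) (q : E -> Q)
  (q_add : forall x y : E, q (x + y) = q x + q y)
  (q_scale : forall (a : R) (x : E), q (a *: x) = pi a *: q x)
  (q_surj : forall y : Q, exists x : E, q x = y)
  (q_ker : forall x : E, q x = 0 <-> exists x' : E, x = r *: x').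

Lemma q0 : q 0 = 0.
Proof. by have := q_add 0 0; rewrite addr0 => /eqP; rewrite -subr_eq subrr eq_sym => /eqP. Qed.
Lemma qN x : q (- x) = - q x.
Proof. by apply/eqP; rewrite -addr_eq0 -q_add addNr q0. Qed.
Lemma qB x y : q (x - y) = q x - q y.
Proof. by rewrite q_add qN. Qed.
Lemma pir : pi r = 0.
Proof. by apply/pi_ker; exists 1; rewrite mulr1. Qed.
Lemma tkill t x y : t * r = 0 -> q x = q y -> t *: x = t *: y.
Proof.
move=> Ht Hq; apply/eqP; rewrite -subr_eq0 -scalerBr.
have /q_ker [z ->] : q (x - y) = 0 by rewrite qB Hq subrr.
by rewrite scalerA Ht scale0r.
Qed.
Lemma tkill0 t x : t * r = 0 -> q x = 0 -> t *: x = 0.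
Proof. by move=> Ht Hq; rewrite (@tkill t x 0) ?scaler0 ?q0. Qed.

Lemma L1 x : (forall t, t * r = 0 -> t *: x = 0) -> q x = 0.
Proof.
move=> Hx.
pose I := fun c : R => exists w, c = r * w.
have rep s s' : r * s = r * s' -> s *: x = s' *: x.
  move=> H; apply/eqP; rewrite -subr_eq0 -scalerBl; apply/eqP/Hx.
  by rewrite mulrBl mulrC H mulrC subrr.
pose psi := fun c => (epsilon (inhabits 0) (fun s => c = r * s)) *: x.
have psiE c s : c = r * s -> psi c = s *: x.
  move=> Hc; rewrite /psi; apply: rep.
  have : exists s, c = r * s by exists s.
  by move/(epsilon_spec (inhabits 0)) => <-.
have [e He] : exists e, forall c, I c -> psi c = c *: e.
  apply: (baerE hE (principal_ideal r)).
- move=> _ _ [s ->] [s' ->]; rewrite -mulrDr !(psiE _ _ erefl).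
  by rewrite scalerDl.
- move=> a _ [s ->]; rewrite (psiE (r * s) s) // (psiE (a * (r * s)) (a * s)).
    by rewrite scalerA.
  by rewrite mulrCA.
apply/q_ker; exists e; rewrite -He; last by exists 1; rewrite mulr1.
by rewrite (psiE _ 1) ?scale1r // mulr1.
Qed.

Section BaerQ.
Variables (J : S -> Prop) (hJ : is_ideal J) (phi : S -> Q)
  (phiD : forall x y, J x -> J y -> phi (x + y) = phi x + phi y)
  (phiZ : forall a x, J x -> phi (a * x) = a *: phi x).

Let phi0 : phi 0 = 0.
Proof.
have J0 : J 0 by case: hJ.
by have := phiD J0 J0; rewrite addr0 => /eqP; rewrite -subr_eq subrr eq_sym => /eqP.
Qed.
Let Jpi0 : J (pi 0). Proof. by rewrite rmorph0; case: hJ. Qed.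
Let JM a x : J x -> J (a * x). Proof. by case: hJ => _ _ H; apply: H. Qed.
Let JD x y : J x -> J y -> J (x + y). Proof. by case: hJ => _ H _; apply: H. Qed.

Definition sec (y : Q) : E := epsilon (inhabits 0) (fun x => q x = y).
Lemma secK y : q (sec y) = y.
Proof. exact: (epsilon_spec (inhabits 0) (fun x => q x = y) (q_surj y)). Qed.
Definition X (a : R) := sec (phi (pi a)).
Lemma qX a : q (X a) = phi (pi a). Proof. exact: secK. Qed.

Lemma Xadd t a b : J (pi a) -> J (pi b) -> t * r = 0 ->
  t *: X (a + b) = t *: X a + t *: X b.
Proof.
move=> Ha Hb Ht; rewrite -scalerDr; apply: tkill => //.
by rewrite q_add !qX rmorphD phiD.
Qed.
Lemma XmulT t a w : J (pi a) -> t * r = 0 -> t *: X (a * w) = (t * w) *: X a.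
Proof.
move=> Ha Ht; rewrite -scalerA; apply: tkill => //.
by rewrite q_scale !qX rmorphM [pi a * _]mulrC phiZ.
Qed.

Lemma Zlem t c : J (pi c) -> t * r = 0 -> c * t = 0 -> t *: X c = 0.
Proof.
move=> Hc Ht Hct.
case: (chain hR c r) => [[v Hv]|[d Hd]].
- case: (chain hR t v) => [[w Hw]|[w Hw]].
  + have r0 : r = 0 by rewrite Hv Hw mulrA Hct mul0r.
    have : q (t *: X c) = 0 by rewrite q_scale qX -phiZ // -rmorphM mulrC Hct rmorph0.
    by move/q_ker=> [e ->]; rewrite r0 scale0r.
  + rewrite Hw mulrC -scalerA.
    have : q (v *: X c) = 0 by rewrite q_scale qX -phiZ // -rmorphM mulrC -Hv pir.
    move/q_ker=> [e ->]; rewrite scalerA.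
    suff -> : w * r = 0 by rewrite scale0r.
    by rewrite Hv mulrCA [w * v]mulrC -Hw Hct.
- apply: tkill0 => //; rewrite qX.
  suff -> : pi c = 0 by [].
  by rewrite Hd rmorphM pir mul0r.
Qed.

Lemma K1 a a' t w : J (pi a) -> J (pi a') -> t * r = 0 ->
  a * t = a' * (t * w) -> t *: X a = (t * w) *: X a'.
Proof.
move=> Ha Ha' Ht Heq.
have Hc : J (pi (a - a' * w)).
  by rewrite rmorphB rmorphM; apply: JD => //; rewrite -mulrN mulrC; apply: JM.
have Hw : J (pi (a' * w)) by rewrite rmorphM mulrC; apply: JM.
have -> : a = (a - a' * w) + a' * w by rewrite subrK.
rewrite Xadd // Zlem ?add0r ?XmulT //.
by rewrite mulrBl Heq -mulrA [w * t]mulrC subrr.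
Qed.

Lemma Klem a a' t t' : J (pi a) -> J (pi a') -> t * r = 0 -> t' * r = 0 ->
  a * t = a' * t' -> t *: X a = t' *: X a'.
Proof.
move=> Ha Ha' Ht Ht' Heq.
case: (chain hR t t') => [[w Hw]|[w Hw]].
- by rewrite Hw; apply: K1 => //; rewrite -Hw.
- by rewrite Hw; symmetry; apply: K1 => //; rewrite -Hw.
Qed.

Definition IQ c := exists a t, [/\ J (pi a), t * r = 0 & c = a * t].
Lemma IQ_ideal : is_ideal IQ.
Proof.
split.
- by exists 0, 0; split; [exact: Jpi0 | rewrite mul0r | rewrite mul0r].
- move=> _ _ [a [t [Ha Ht ->]]] [a' [t' [Ha' Ht' ->]]].
  case: (chain hR t t') => [[w ->]|[w ->]].
  + exists (a + a' * w), t; split => //.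
      by rewrite rmorphD rmorphM; apply: JD => //; rewrite mulrC; apply: JM.
    by rewrite mulrDl -mulrA [w * t]mulrC.
  + exists (a * w + a'), t'; split => //.
      by rewrite rmorphD rmorphM; apply: JD => //; rewrite mulrC; apply: JM.
    by rewrite mulrDl -mulrA [w * t']mulrC.
- move=> d _ [a [t [Ha Ht ->]]]; exists (d * a), t; split => //.
    by rewrite rmorphM; apply: JM.
  by rewrite mulrA.
Qed.

Definition psiQ (c : R) : E :=
  let p := epsilon (inhabits (0, 0))
     (fun p : R * R => [/\ J (pi p.1), p.2 * r = 0 & c = p.1 * p.2]) in
  p.2 *: X p.1.

Lemma psiQE c a t : J (pi a) -> t * r = 0 -> c = a * t -> psiQ c = t *: X a.
Proof.
move=> Ha Ht Hc; rewrite /psiQ.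
have : exists p : R * R, [/\ J (pi p.1), p.2 * r = 0 & c = p.1 * p.2].
  by exists (a, t).
move/(epsilon_spec (inhabits (0, 0))) => [H1 H2 H3].
by apply: Klem => //; rewrite -H3.
Qed.

Lemma baerQ : exists y, forall j, J j -> phi j = j *: y.
Proof.
have [e He] : exists e, forall c, IQ c -> psiQ c = c *: e.
  apply: (baerE hE IQ_ideal).
  - move=> _ _ [a [t [Ha Ht ->]]] [a' [t' [Ha' Ht' ->]]].
    rewrite (psiQE Ha Ht erefl) (psiQE Ha' Ht' erefl).
    case: (chain hR t t') => [[w Hw]|[w Hw]].
    + have Hw' : J (pi (a' * w)) by rewrite rmorphM mulrC; apply: JM.
      rewrite (@psiQE _ (a + a' * w) t) //; last by rewrite mulrDl -mulrA [w * t]mulrC -Hw.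
        by rewrite Xadd // XmulT // -Hw.
      by rewrite rmorphD; apply: JD.
    + have Hw' : J (pi (a * w)) by rewrite rmorphM mulrC; apply: JM.
      rewrite (@psiQE _ (a * w + a') t') //; last by rewrite mulrDl -mulrA [w * t']mulrC -Hw.
        by rewrite Xadd // XmulT // -Hw.
      by rewrite rmorphD; apply: JD.
  - move=> d _ [a [t [Ha Ht ->]]].
    have Hda : J (pi (a * d)) by rewrite rmorphM mulrC; apply: JM.
    rewrite (psiQE Ha Ht erefl) (@psiQE _ (a * d) t) //; last by rewrite mulrA [d * a]mulrC.
    by rewrite XmulT // scalerA mulrC.
exists (q e) => j Hj.
have [a Ha] := pi_surj j; subst j.
rewrite -q_scale -qX; apply/eqP; rewrite -subr_eq0 -qB; apply/eqP/L1.
move=> t Ht; rewrite scalerBr; apply/eqP; rewrite subr_eq0; apply/eqP.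
rewrite -(psiQE Hj Ht erefl) He; last by exists a, t.
by rewrite scalerA mulrC.
Qed.
End BaerQ.
End Main.
Definition baer_prop (S : comNzRingType) (Q : lmodType S) :=
  forall J : S -> Prop, is_ideal J -> forall phi : S -> Q,
  (forall x y, J x -> J y -> phi (x + y) = phi x + phi y) ->
  (forall a x, J x -> phi (a * x) = a *: phi x) ->
  exists y, forall j, J j -> phi j = j *: y.

Section Baer.
Variables (S : comNzRingType) (Q : lmodType S) (hB : baer_prop Q).
Variables (A B : lmodType S) (f : {linear A -> B}) (g : {linear A -> Q})
  (finj : injective f).

Record good (p : (B -> Prop) * (B -> Q)) : Prop := Good {
  gD : forall x y, p.1 x -> p.1 y -> p.1 (x + y);
  gZ : forall (a : S) x, p.1 x -> p.1 (a *: x);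
  gf : forall a, p.1 (f a);
  gkD : forall x y, p.1 x -> p.1 y -> p.2 (x + y) = p.2 x + p.2 y;
  gkZ : forall (a : S) x, p.1 x -> p.2 (a *: x) = a *: p.2 x;
  gg : forall a, p.2 (f a) = g a }.

Definition T := {p | good p}.
Definition le (p p' : (B -> Prop) * (B -> Q)) :=
  (forall x, p.1 x -> p'.1 x) /\ (forall x, p.1 x -> p.2 x = p'.2 x).
Definition Rel (p p' : T) : bool := `[< le (sval p) (sval p') >].

Definition D0 := fun b => exists a, b = f a.
Definition k0 := fun b => g (epsilon (inhabits 0) (fun a => b = f a)).
Lemma k0E a : k0 (f a) = g a.
Proof.
rewrite /k0; congr (g _); apply: finj.
by rewrite -(epsilon_spec (inhabits 0) (fun a' => f a = f a')) //; exists a.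
Qed.
Lemma good0 : good (D0, k0).
Proof.
split => /=.
- by move=> _ _ [a ->] [a' ->]; exists (a + a'); rewrite linearD.
- by move=> c _ [a ->]; exists (c *: a); rewrite linearZ.
- by move=> a; exists a.
- by move=> _ _ [a ->] [a' ->]; rewrite -linearD !k0E linearD.
- by move=> c _ [a ->]; rewrite -linearZ !k0E linearZ.
- exact: k0E.
Qed.
Definition t0 : T := exist _ _ good0.

Lemma D_0 (p : T) : (sval p).1 0.
Proof. by case: (proj2_sig p) => _ _ Hf _ _ _; rewrite -(linear0 f). Qed.
Lemma kN (p : T) x : (sval p).1 x -> (sval p).2 (- x) = - (sval p).2 x.
Proof. by case: (proj2_sig p) => _ _ _ _ HZ _ Hx; rewrite -scaleN1r HZ // scaleN1r. Qed.
Lemma kB (p : T) x y : (sval p).1 x -> (sval p).1 y ->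
  (sval p).2 (x - y) = (sval p).2 x - (sval p).2 y.
Proof.
move=> Hx Hy; case: (proj2_sig p) => _ HZ _ HD _ _.
have Hny : (sval p).1 (- y) by rewrite -scaleN1r; apply: HZ.
by rewrite HD // kN.
Qed.

Section Chain.
Variable (CA : set T) (Ctot : total_on CA Rel) (p0 : T) (Hp0 : CA p0).
Definition Dst := fun x => exists p, CA p /\ (sval p).1 x.
Definition pick x := epsilon (inhabits t0) (fun p => CA p /\ (sval p).1 x).
Definition kst := fun x => (sval (pick x)).2 x.
Lemma pickP x : Dst x -> CA (pick x) /\ (sval (pick x)).1 x.
Proof. exact: (epsilon_spec (inhabits t0) (fun p => CA p /\ (sval p).1 x)). Qed.
Lemma kstE p x : CA p -> (sval p).1 x -> kst x = (sval p).2 x.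
Proof.
move=> Hp Hx; have [H1 H2] := pickP (ex_intro _ p (conj Hp Hx)).
rewrite /kst; case: (Ctot H1 Hp) => /asboolP [_ Hk].
- by rewrite Hk.
- by rewrite Hk.
Qed.
Lemma common p p' x y : CA p -> CA p' -> (sval p).1 x -> (sval p').1 y ->
  exists q, [/\ CA q, (sval q).1 x & (sval q).1 y].
Proof.
move=> Hp Hp' Hx Hy; case: (Ctot Hp Hp') => /asboolP [Hs _].
- by exists p'; split => //; apply: Hs.
- by exists p; split => //; apply: Hs.
Qed.
Lemma goodst : good (Dst, kst).
Proof.
split => /=.
- move=> x y [p [Hp Hx]] [p' [Hp' Hy]].
  have [q [Hq Hx' Hy']] := common Hp Hp' Hx Hy.
  by exists q; split => //; case: (proj2_sig q) => HD _ _ _ _ _; apply: HD.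
- move=> a x [p [Hp Hx]]; exists p; split => //.
  by case: (proj2_sig p) => _ HZ _ _ _ _; apply: HZ.
- by move=> a; exists p0; split => //; case: (proj2_sig p0) => _ _ Hf _ _ _.
- move=> x y [p [Hp Hx]] [p' [Hp' Hy]].
  have [q [Hq Hx' Hy']] := common Hp Hp' Hx Hy.
  case: (proj2_sig q) => HD _ _ HkD _ _.
  by rewrite !(kstE Hq) ?HkD //; apply: HD.
- move=> a x [p [Hp Hx]].
  case: (proj2_sig p) => _ HZ _ _ HkZ _.
  by rewrite !(kstE Hp) ?HkZ //; apply: HZ.
- move=> a; case: (proj2_sig p0) => _ _ Hf _ _ Hg.
  by rewrite (kstE Hp0) ?Hg.
Qed.
Lemma ubst p : CA p -> Rel p (exist _ _ goodst).
Proof.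
move=> Hp; apply/asboolP; split => /= x Hx; first by exists p.
by rewrite (kstE Hp).
Qed.
End Chain.

Section Ext.
Variable (p : T) (b : B).
Local Notation D := (sval p).1.
Local Notation k := (sval p).2.
Local Notation gp := (proj2_sig p).
Definition Jb := fun s : S => D (s *: b).
Lemma Jb_ideal : is_ideal Jb.
Proof.
rewrite /Jb; case: gp => HD HZ _ _ _ _; split.
- by rewrite scale0r; apply: D_0.
- by move=> x y Hx Hy; rewrite scalerDl; apply: HD.
- by move=> a x Hx; rewrite -scalerA; apply: HZ.
Qed.
Lemma exists_y : exists y, forall s, Jb s -> k (s *: b) = s *: y.
Proof.
apply: (hB Jb_ideal (phi := fun s => k (s *: b))); rewrite /Jb;
  case: gp => HD HZ _ HkD HkZ _.
- by move=> x y Hx Hy; rewrite scalerDl HkD.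
- by move=> a x Hx; rewrite -scalerA HkZ.
Qed.
Variable (y : Q) (Hy : forall s, Jb s -> k (s *: b) = s *: y).
Definition D' := fun x => exists d s, D d /\ x = d + s *: b.
Definition repr x := epsilon (inhabits (0, 0)) (fun ds : B * S => D ds.1 /\ x = ds.1 + ds.2 *: b).
Definition k' := fun x => k (repr x).1 + (repr x).2 *: y.
Lemma k'E d s : D d -> k' (d + s *: b) = k d + s *: y.
Proof.
move=> Hd; rewrite /k'.
have [] : D (repr (d + s *: b)).1 /\ d + s *: b = (repr (d + s *: b)).1 + (repr (d + s *: b)).2 *: b.
  by apply: (epsilon_spec (inhabits (0, 0)) (fun ds : B * S => D ds.1 /\ d + s *: b = ds.1 + ds.2 *: b)); exists (d, s).
case: (repr (d + s *: b)) => d' s' /= Hd' Heq.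
have Hdiff : s' *: b - s *: b = d - d'.
  by rewrite -[s' *: b](addKr d') -Heq -addrA addrK addrC.
have HJ : Jb (s' - s).
  rewrite /Jb scalerBl Hdiff.
  by case: gp => HD HZ _ _ _ _; apply: HD => //; rewrite -scaleN1r; apply: HZ.
have := Hy HJ; rewrite scalerBl Hdiff.
rewrite (kB Hd Hd') scalerBl => /eqP; rewrite subr_eq => /eqP ->.
by rewrite addrAC subrK addrC.
Qed.
Lemma goodext : good (D', k').
Proof.
case: gp => HD HZ Hf HkD HkZ Hg.
split => /=.
- move=> _ _ [d [s [Hd ->]]] [d' [s' [Hd' ->]]]; exists (d + d'), (s + s').
  by split; [apply: HD | rewrite scalerDl addrACA].
- move=> a _ [d [s [Hd ->]]]; exists (a *: d), (a * s).
  by split; [apply: HZ | rewrite scalerDr scalerA].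
- by move=> a; exists (f a), 0; split; rewrite ?scale0r ?addr0.
- move=> _ _ [d [s [Hd ->]]] [d' [s' [Hd' ->]]].
  rewrite addrACA -scalerDl !k'E ?HkD //; last by apply: HD.
  by rewrite scalerDl addrACA.
- move=> a _ [d [s [Hd ->]]].
  rewrite scalerDr scalerA !k'E ?HkZ //; last by apply: HZ.
  by rewrite scalerDr scalerA.
- move=> a; have -> : f a = f a + 0 *: b by rewrite scale0r addr0.
  by rewrite k'E // scale0r addr0 Hg.
Qed.
Lemma le_ext : Rel p (exist _ _ goodext).
Proof.
apply/asboolP; split => /= x Hx.
- by exists x, 0; split; rewrite ?scale0r ?addr0.
- have E1 : x = x + 0 *: b by rewrite scale0r addr0.
  by rewrite [in RHS]E1 k'E // scale0r addr0.
Qed.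
End Ext.

Lemma baer_inj_ext : exists h : {linear B -> Q}, forall a, h (f a) = g a.
Proof.
have [p Hp] : exists p, premaximal Rel p.
  apply: (@ZL_preorder T t0 Rel).
- by move=> t; apply/asboolP; split.
- move=> a b c /asboolP [H1 H2] /asboolP [H3 H4]; apply/asboolP; split => x Hx.
    by apply: H3; apply: H1.
  by rewrite H2 // H4 //; apply: H1.
- move=> CA Ctot; case: (classic (exists p0, CA p0)) => [[p0 Hp0]|Hn].
    by exists (exist _ _ (goodst Ctot Hp0)) => s Hs; apply: ubst.
  by exists t0 => s Hs; exfalso; apply: Hn; exists s.
have allD : forall b, (sval p).1 b.
  move=> b; have [y Hy] := exists_y p b.
  have /asboolP [Hsub _] := Hp _ (le_ext Hy).
  apply: Hsub; exists 0, 1; split; first exact: D_0.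
  by rewrite scale1r add0r.
case: (proj2_sig p) => _ _ _ HkD HkZ Hg.
have hlin : linear (sval p).2.
  by move=> a x z; rewrite HkD ?HkZ ?allD.
exists (mkLin hlin) => a; exact: Hg.
Qed.
End Baer.

Theorem mainTheorem3 (R : comNzRingType) (hR : valuation_ring R)
  (P : R -> Prop) (hP : maximal_ideal P)
  (E : lmodType R) (hE : injective_module E)
  (r : R) (hr : P r)
  (S : comNzRingType) (pi : {rmorphism R -> S})
  (pi_surj : forall s : S, exists a : R, pi a = s)
  (pi_ker : forall a : R, pi a = 0 <-> exists b : R, a = r * b)
  (Q : lmodType S) (q : E -> Q)
  (q_add : forall x y : E, q (x + y) = q x + q y)
  (q_scale : forall (a : R) (x : E), q (a *: x) = pi a *: q x)
  (q_surj : forall y : Q, exists x : E, q x = y)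
  (q_ker : forall x : E, q x = 0 <-> exists x' : E, x = r *: x') :
  injective_module Q.
Proof.
move=> A B f g finj; apply: (baer_inj_ext _ g finj).
move=> J hJ phi phiD phiZ.
exact: (baerQ hR hE pi_surj pi_ker q_add q_scale q_surj q_ker hJ phiD phiZ).
Qed.
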